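(* (2-cut with spill in MRL.) Let $R_1,R_2\subseteq\mathcal{R}$ be such that $\overline{R_1}$ and $\overline{R_2}$ are disjoint. For all sequents $\Gamma_1,\Gamma_2$ and every formula $A$ of MRL: if $\Gamma_1, R_1{:}A$ and $\Gamma_2, R_2{:}A$ are both derivable in MRL, then $\Gamma_1,\Gamma_2,(R_1\cap R_2){:}A$ is derivable in MRL.
   Context: Fix a nonempty set $\mathcal{R}$ (the set of roles). For $R\subseteq\mathcal{R}$ write $\overline{R}=\mathcal{R}\setminus R$. An ultrafilter $\mathcal{U}$ on $\mathcal{R}$ is a set of subsets of $\mathcal{R}$ such that $\mathcal{R}\in\mathcal{U}$; $R_1\in\mathcal{U}$ and $R_1\subseteq R_2$ imply $R_2\in\mathcal{U}$; $R_1,R_2\in\mathcal{U}$ imply $R_1\cap R_2\in\mathcal{U}$; and for every $R\subseteq\mathcal{R}$, $R\in\mathcal{U}$ or $\overline{R}\in\mathcal{U}$. An endomorphism is any function $f:\mathcal{R}\to\mathcal{R}$, and $f^{-1}(R)$ denotes the preimage of $R$. Fix a first-order language of terms $t$ with variables $x$, and a collection of primitive (atomic) formulas $a$ (which may contain terms). Formulas of MRL: $A ::= a \mid \neg_f(A) \mid A_1\wedge_{\mathcal{U}} A_2 \mid A\supset_{f,\mathcal{U}} B \mid \forall_{\mathcal{U}}(\lambda x.A)$, with $f$ an endomorphism and $\mathcal{U}$ an ultrafilter on $\mathcal{R}$; $x$ is bound in $\forall_{\mathcal{U}}(\lambda x.A)$, and $A[t/x]$ is capture-avoiding substitution. An i-formula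 is a pair $R{:}A$ with $R\subseteq\mathcal{R}$ and $A$ a formula; a sequent is a finite multiset of i-formulas, and comma denotes multiset union. Derivability in MRL is given by the rules (premises $\Rightarrow$ conclusion, $\Gamma,\Gamma_1,\Gamma_2$ arbitrary sequents): (Id) $\Gamma, R_1{:}a,\ldots,R_n{:}a$ is derivable whenever $n\ge1$ and $R_1,\ldots,R_n$ are pairwise disjoint with union $\mathcal{R}$; (Weaken) $\Gamma,R{:}A,R{:}A \Rightarrow \Gamma,R{:}A$; ($\neg$) $\Gamma, f^{-1}(R){:}A \Rightarrow \Gamma, R{:}\neg_f(A)$; ($\wedge$-neg-l) if $R\notin\mathcal{U}$: $\Gamma,R{:}A\Rightarrow\Gamma,R{:}A\wedge_{\mathcal{U}}B$; ($\wedge$-neg-r) if $R\notin\mathcal{U}$: $\Gamma,R{:}B\Rightarrow\Gamma,R{:}A\wedge_{\mathcal{U}}B$; ($\wedge$-pos) if $R\in\mathcal{U}$: $(\Gamma,R{:}A;\ \Gamma,R{:}B)\Rightarrow\Gamma,R{:}A\wedge_{\mathcal{U}}B$; ($\supset$-neg) if $R\notin\mathcal{U}$: $\Gamma,f^{-1}(R){:}A,R{:}B\Rightarrow\Gamma,R{:}A\supset_{f,\mathcal{U}}B$; ($\supset$-pos) if $R\in\mathcal{U}$: $(\Gamma_1,f^{-1}(R){:}A;\ \Gamma_2,R{:}B)\Rightarrow\Gamma_1,\Gamma_2,R{:}A\supset_{f,\mathcal{U}}B$; ($\forall$-neg) if $R\notin\mathcal{U}$ and $t$ is a term: $\Gamma,R{:}A[t/x]\Rightarrow\Gamma,R{:}\forall_{\mathcal{U}}(\lambda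 x.A)$; ($\forall$-pos) if $R\in\mathcal{U}$ and $x$ has no free occurrence in $\Gamma$: $\Gamma,R{:}A\Rightarrow\Gamma,R{:}\forall_{\mathcal{U}}(\lambda x.A)$. A sequent is derivable in MRL if it is the conclusion of a finite derivation tree built from these rules. *)

(* Defs.v *)
From Stdlib Require Import List Arith Permutation.
Import ListNotations.
Set Implicit Arguments.

Definition rset (Role : Type) := Role -> Prop.

Definition rcompl {Role : Type} (R : rset Role) : rset Role := fun r => ~ R r.
Definition rinter {Role : Type} (R1 R2 : rset Role) : rset Role :=
  fun r => R1 r /\ R2 r.
Definition rpreim {Role : Type} (f : Role -> Role) (R : rset Role) : rset Role :=
  fun r => R (f r).
Definition rfull {Role : Type} : rset Role := fun _ => True.
Definition rempty {Role : Type} : rset Role := fun _ => False.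

Definition is_ultrafilter {Role : Type} (U : rset Role -> Prop) : Prop :=
  U rfull /\
  (forall R1 R2 : rset Role, U R1 -> (forall r, R1 r -> R2 r) -> U R2) /\
  (forall R1 R2 : rset Role, U R1 -> U R2 -> U (rinter R1 R2)) /\
  (forall R : rset Role, U R \/ U (rcompl R)).

Definition ultrafilter (Role : Type) := { U : rset Role -> Prop | is_ultrafilter U }.

Definition uin {Role : Type} (R : rset Role) (U : ultrafilter Role) : Prop :=
  proj1_sig U R.

(* First-order terms over function symbols F, with de Bruijn variables. *)
Inductive term (F : Type) : Type :=
| Var : nat -> term F
| Fn : F -> list (term F) -> term F.
Arguments Var {F} _.

Fixpoint tshift {F : Type} (k : nat) (t : term F) : term F :=
  match t with
  | Var n => Var (if n <? k then n else S n)
  | Fn f ts => Fn f (map (tshift k) ts)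
  end.

Fixpoint tsubst {F : Type} (k : nat) (s : term F) (t : term F) : term F :=
  match t with
  | Var n => if n <? k then Var n else if n =? k then s else Var (pred n)
  | Fn f ts => Fn f (map (tsubst k s) ts)
  end.

Inductive atom (F P : Type) : Type :=
| Atom : P -> list (term F) -> atom F P.

Inductive formula (Role F P : Type) : Type :=
| Prim : atom F P -> formula Role F P
| Neg : (Role -> Role) -> formula Role F P -> formula Role F P
| And : ultrafilter Role -> formula Role F P -> formula Role F P -> formula Role F P
| Imp : (Role -> Role) -> ultrafilter Role ->
        formula Role F P -> formula Role F P -> formula Role F P
| All : ultrafilter Role -> formula Role F P -> formula Role F P.
(* All U A  represents  forall_U (lambda x. A), x being de Bruijn index 0 in A *)

Definition ashift {F P : Type} (k : nat) (a : atom F P) : atom F P :=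
  match a with Atom p ts => Atom p (map (tshift k) ts) end.
Definition asubst {F P : Type} (k : nat) (s : term F) (a : atom F P) : atom F P :=
  match a with Atom p ts => Atom p (map (tsubst k s) ts) end.

Fixpoint fshift {Role F P : Type} (k : nat) (A : formula Role F P) : formula Role F P :=
  match A with
  | Prim _ a => Prim _ (ashift k a)
  | Neg f B => Neg f (fshift k B)
  | And U B C => And U (fshift k B) (fshift k C)
  | Imp f U B C => Imp f U (fshift k B) (fshift k C)
  | All U B => All U (fshift (S k) B)
  end.

Fixpoint fsubst {Role F P : Type} (k : nat) (s : term F) (A : formula Role F P)
  : formula Role F P :=
  match A with
  | Prim _ a => Prim _ (asubst k s a)
  | Neg f B => Neg f (fsubst k s B)
  | And U B C => And U (fsubst k s B) (fsubst k s C)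
  | Imp f U B C => Imp f U (fsubst k s B) (fsubst k s C)
  | All U B => All U (fsubst (S k) (tshift 0 s) B)
  end.

Definition inst {Role F P : Type} (A : formula Role F P) (t : term F) :=
  fsubst 0 t A.

(* i-formulas and sequents (multisets represented by lists up to permutation) *)
Definition iformula (Role F P : Type) := (rset Role * formula Role F P)%type.
Definition sequent (Role F P : Type) := list (iformula Role F P).

Definition seq_shift {Role F P : Type} (G : sequent Role F P) : sequent Role F P :=
  map (fun RA => (fst RA, fshift 0 (snd RA))) G.

Definition partition_of_roles {Role : Type} (Rs : list (rset Role)) : Prop :=
  Rs <> [] /\
  (forall i j, i < length Rs -> j < length Rs -> i <> j ->
     forall r, ~ (nth i Rs rempty r /\ nth j Rs rempty r)) /\
  (forall r, exists R, In R Rs /\ R r).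

Inductive derivable {Role F P : Type} : sequent Role F P -> Prop :=
| d_perm : forall G D, Permutation G D -> derivable G -> derivable D
| d_id : forall G (Rs : list (rset Role)) (a : atom F P),
    partition_of_roles Rs ->
    derivable (G ++ map (fun R => (R, Prim _ a)) Rs)
| d_weaken : forall G R A,
    derivable (G ++ [(R, A); (R, A)]) -> derivable (G ++ [(R, A)])
| d_neg : forall G R f A,
    derivable (G ++ [(rpreim f R, A)]) -> derivable (G ++ [(R, Neg f A)])
| d_and_neg_l : forall G R U A B, ~ uin R U ->
    derivable (G ++ [(R, A)]) -> derivable (G ++ [(R, And U A B)])
| d_and_neg_r : forall G R U A B, ~ uin R U ->
    derivable (G ++ [(R, B)]) -> derivable (G ++ [(R, And U A B)])
| d_and_pos : forall G R U A B, uin R U ->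
    derivable (G ++ [(R, A)]) -> derivable (G ++ [(R, B)]) ->
    derivable (G ++ [(R, And U A B)])
| d_imp_neg : forall G R f U A B, ~ uin R U ->
    derivable (G ++ [(rpreim f R, A); (R, B)]) ->
    derivable (G ++ [(R, Imp f U A B)])
| d_imp_pos : forall G1 G2 R f U A B, uin R U ->
    derivable (G1 ++ [(rpreim f R, A)]) -> derivable (G2 ++ [(R, B)]) ->
    derivable (G1 ++ G2 ++ [(R, Imp f U A B)])
| d_all_neg : forall G R U A (t : term F), ~ uin R U ->
    derivable (G ++ [(R, inst A t)]) -> derivable (G ++ [(R, All U A)])
| d_all_pos : forall G R U A, uin R U ->
    (* eigenvariable condition: de Bruijn index 0 is fresh for the shifted G *)
    derivable (seq_shift G ++ [(R, A)]) -> derivable (G ++ [(R, All U A)]).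

(* Main.v *)
Require Import Defs.
From Stdlib Require Import List.
Import ListNotations.
From Stdlib Require Import List Arith Lia Permutation ClassicalEpsilon.
Import ListNotations.

Definition cdec {T : Type} : forall a b : T, {a = b} + {a <> b} :=
  fun a b => excluded_middle_informative (a = b).

Lemma cnt_cons {T : Type} (x : T) l y :
  count_occ cdec (x :: l) y = count_occ cdec [x] y + count_occ cdec l y.
Proof. simpl. destruct (cdec x y); lia. Qed.

Ltac psolve :=
  try unfold iformula, sequent in *; apply (proj2 (Permutation_count_occ cdec _ _)); intro;
  repeat progress (rewrite ?count_occ_app, ?map_app;
   try match goal with |- context [count_occ cdec (?x :: ?l) ?y] =>
     lazymatch l with [] => fail | _ => rewrite (cnt_cons x l y) end end);
  lia.

Goal forall (x y : nat) (X Y1 Y2 : list nat), Permutation (x :: X ++ Y1 ++ x :: Y2) (((X ++ Y1 ++ Y2) ++ [x; x])).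
intros. psolve. Qed.

Section Terms.
Variable F : Type.

Fixpoint term_ind' (Pt : term F -> Prop) (HV : forall n, Pt (Var n))
  (HF : forall f ts, Forall Pt ts -> Pt (Fn f ts)) (t : term F) : Pt t :=
  match t with
  | Var n => HV n
  | Fn f ts => HF f ts ((fix go (l : list (term F)) : Forall Pt l :=
       match l with
       | [] => Forall_nil _
       | x :: l' => Forall_cons _ (term_ind' Pt HV HF x) (go l')
       end) ts)
  end.

Ltac nat_crush :=
  repeat (cbn [tshift tsubst]; match goal with
  | |- context [?a <? ?b] => destruct (Nat.ltb_spec a b)
  | |- context [?a =? ?b] => destruct (Nat.eqb_spec a b)
  end); try reflexivity; try (exfalso; lia); try (f_equal; lia).

Ltac fn_case IH := simpl; f_equal; rewrite ?map_map; apply map_ext_in; intros;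
  rewrite Forall_forall in IH; auto.

Lemma T1t : forall (t : term F) j k, j <= k -> tshift (S k) (tshift j t) = tshift j (tshift k t).
Proof.
  intro t; induction t using term_ind'; intros j k Hjk.
  - destruct (Nat.ltb_spec n j); destruct (Nat.ltb_spec n k); nat_crush.
  - simpl; f_equal; rewrite !map_map; apply map_ext_in; intros.
    rewrite Forall_forall in H; auto.
Qed.

Lemma T2t : forall (t : term F) s j k, j <= k ->
  tshift k (tsubst j s t) = tsubst j (tshift k s) (tshift (S k) t).
Proof.
  intro t; induction t using term_ind'; intros s j k Hjk.
  - destruct (Nat.ltb_spec n j); destruct (Nat.ltb_spec n (S k)); destruct (Nat.eqb_spec n j);
    nat_crush.
  - simpl; f_equal; rewrite !map_map; apply map_ext_in; intros.
    rewrite Forall_forall in H; auto.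
Qed.

Lemma T4t : forall (t : term F) u j, tsubst j u (tshift j t) = t.
Proof.
  intro t; induction t using term_ind'; intros u j.
  - destruct (Nat.ltb_spec n j); nat_crush.
  - simpl; f_equal; rewrite map_map; transitivity (map (fun x => x) ts); [apply map_ext_in; intros| apply map_id].
    rewrite Forall_forall in H; auto.
Qed.

Lemma T5t : forall (t : term F) s j k, j <= k ->
  tshift j (tsubst k s t) = tsubst (S k) (tshift j s) (tshift j t).
Proof.
  intro t; induction t using term_ind'; intros s j k Hjk.
  - destruct (Nat.ltb_spec n j); destruct (Nat.ltb_spec n k); destruct (Nat.eqb_spec n k);
    nat_crush.
  - simpl; f_equal; rewrite !map_map; apply map_ext_in; intros.
    rewrite Forall_forall in H; auto.
Qed.

Lemma T3t : forall (v : term F) s t j k, j <= k ->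
  tsubst k s (tsubst j t v) = tsubst j (tsubst k s t) (tsubst (S k) (tshift j s) v).
Proof.
  intro v; induction v using term_ind'; intros s t j k Hjk.
  - destruct (Nat.ltb_spec n j); destruct (Nat.eqb_spec n j).
    + nat_crush.
    + nat_crush.
    + subst. nat_crush.
    + destruct (Nat.ltb_spec n (S k)); destruct (Nat.eqb_spec n (S k)); nat_crush.
      subst. rewrite T4t. reflexivity.
  - simpl; f_equal; rewrite !map_map; apply map_ext_in; intros.
    rewrite Forall_forall in H; auto.
Qed.

Lemma T6t : forall (t : term F) j, tsubst j (Var j) (tshift (S j) t) = t.
Proof.
  intro t; induction t using term_ind'; intros j.
  - destruct (Nat.ltb_spec n (S j)); nat_crush.
  - simpl; f_equal; rewrite map_map; transitivity (map (fun x => x) ts); [apply map_ext_in; intros| apply map_id].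
    rewrite Forall_forall in H; auto.
Qed.
End Terms.
Section Forms.
Variables Role F P : Type.
Notation form := (formula Role F P).

Ltac atom_case L := intros; simpl; f_equal;
  match goal with a : atom F P |- _ => destruct a end; simpl; f_equal;
  rewrite ?map_map; apply map_ext; intros; apply L; lia.

Lemma F1 : forall (A : form) j k, j <= k -> fshift (S k) (fshift j A) = fshift j (fshift k A).
Proof.
  induction A; intros j k Hjk; simpl; try (f_equal; auto; fail).
  - destruct a; simpl; do 2 f_equal; rewrite !map_map; apply map_ext; intros; apply T1t; lia.
  - f_equal; apply IHA; lia.
Qed.

Lemma F2 : forall (A : form) s j k, j <= k ->
  fshift k (fsubst j s A) = fsubst j (tshift k s) (fshift (S k) A).
Proof.
  induction A; intros s j k Hjk; simpl; try (f_equal; auto; fail).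
  - destruct a; simpl; do 2 f_equal; rewrite !map_map; apply map_ext; intros; apply T2t; lia.
  - f_equal. rewrite IHA by lia. f_equal. apply T1t; lia.
Qed.

Lemma F3 : forall (A : form) s t j k, j <= k ->
  fsubst k s (fsubst j t A) = fsubst j (tsubst k s t) (fsubst (S k) (tshift j s) A).
Proof.
  induction A; intros s t j k Hjk; simpl; try (f_equal; auto; fail).
  - destruct a; simpl; do 2 f_equal; rewrite !map_map; apply map_ext; intros; apply T3t; lia.
  - f_equal. rewrite IHA by lia. f_equal.
    + symmetry; apply T5t; lia.
    + f_equal. apply T1t; lia.
Qed.

Lemma F4 : forall (A : form) u j, fsubst j u (fshift j A) = A.
Proof.
  induction A; intros uu j; simpl; try (f_equal; auto; fail).
  destruct a; simpl; do 2 f_equal; rewrite map_map;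
  transitivity (map (fun x => x) l); [apply map_ext; intros; apply T4t | apply map_id].
Qed.

Lemma F5 : forall (A : form) s j k, j <= k ->
  fshift j (fsubst k s A) = fsubst (S k) (tshift j s) (fshift j A).
Proof.
  induction A; intros s j k Hjk; simpl; try (f_equal; auto; fail).
  - destruct a; simpl; do 2 f_equal; rewrite !map_map; apply map_ext; intros; apply T5t; lia.
  - f_equal. rewrite IHA by lia. f_equal. apply T1t; lia.
Qed.

Lemma F6 : forall (A : form) j, fsubst j (Var j) (fshift (S j) A) = A.
Proof.
  induction A; intros j; simpl; try (f_equal; auto; fail).
  destruct a; simpl; do 2 f_equal; rewrite map_map;
  transitivity (map (fun x => x) l); [apply map_ext; intros; apply T6t | apply map_id].
Qed.

Fixpoint fsize (A : form) : nat :=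
  match A with
  | Prim _ _ => 1
  | Neg _ B => S (fsize B)
  | And _ B C => S (fsize B + fsize C)
  | Imp _ _ B C => S (fsize B + fsize C)
  | All _ B => S (fsize B)
  end.

Lemma fsize_shift : forall (A : form) k, fsize (fshift k A) = fsize A.
Proof. induction A; intros; simpl; auto. Qed.
Lemma fsize_subst : forall (A : form) k s, fsize (fsubst k s A) = fsize A.
Proof. induction A; intros; simpl; auto. Qed.
End Forms.
Arguments fsize {Role F P}.
Section Deriv.
Variables Role F P : Type.
Notation form := (formula Role F P).
Notation seqt := (sequent Role F P).
Notation der := (@derivable Role F P).

Ltac pw := rewrite <- ?app_assoc; apply Permutation_app_head; apply Permutation_app_comm.

Ltac mv := match goal with |- derivable ((?G0 ++ ?x) ++ ?Z) => apply d_perm with (G := (G0 ++ Z) ++ x); [pw|] end.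
Ltac mv2 := match goal with |- derivable ((?G0 ++ ?Z) ++ ?x) => apply d_perm with (G := (G0 ++ x) ++ Z); [pw|] end.

Lemma weak : forall X : seqt, der X -> forall Z, der (X ++ Z).
Proof.
  induction 1; intros Z.
  - eapply d_perm; [apply Permutation_app_tail; eassumption| auto].
  - eapply d_perm; [| apply (d_id (G ++ Z)); eauto]; rewrite <- !app_assoc; apply Permutation_app_head; apply Permutation_app_comm.
  - mv. apply d_weaken. mv2; apply IHderivable.
  - mv. apply d_neg. mv2; apply IHderivable.
  - mv. apply d_and_neg_l; auto. mv2; apply IHderivable.
  - mv. apply d_and_neg_r; auto. mv2; apply IHderivable.
  - mv. apply d_and_pos; auto; mv2; auto.
  - mv. apply d_imp_neg; auto. mv2; apply IHderivable.
  - apply d_perm with (G := (G1 ++ Z) ++ G2 ++ [(R, Imp f U A B)]);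
    [rewrite <- !app_assoc; apply Permutation_app_head; rewrite (app_assoc G2); apply Permutation_app_comm|].
    apply d_imp_pos; auto. mv2; auto.
  - mv. eapply d_all_neg; eauto. mv2; apply IHderivable.
  - mv. apply d_all_pos; auto.
    eapply d_perm; [| apply (IHderivable (Defs.seq_shift Z))].
    unfold Defs.seq_shift; rewrite map_app. pw.
Qed.

Lemma contr_incl : forall X Y : seqt, der (X ++ Y) -> incl X Y -> der Y.
Proof.
  induction X as [|x X IH]; intros Y HD Hi; simpl in *; auto.
  apply IH; [| intros z Hz; apply Hi; right; auto].
  assert (Hx : In x Y) by (apply Hi; left; auto).
  destruct (in_split _ _ Hx) as (Y1 & Y2 & ->).
  eapply d_perm with ((X ++ Y1 ++ Y2) ++ [x]); [psolve|].
  destruct x as [R A]. apply d_weaken. eapply d_perm; [| exact HD]. psolve.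
Qed.

Lemma der_incl : forall X Y : seqt, der X -> incl X Y -> der Y.
Proof. intros X Y H Hi. apply (contr_incl X Y); auto. apply weak; auto. Qed.
End Deriv.
Section Maps.
Variables Role F P : Type.
Notation form := (formula Role F P).
Notation seqt := (sequent Role F P).
Notation der := (@derivable Role F P).

Definition shk (k : nat) (RA : iformula Role F P) : iformula Role F P :=
  (fst RA, fshift k (snd RA)).
Definition sbk (k : nat) (s : term F) (RA : iformula Role F P) : iformula Role F P :=
  (fst RA, fsubst k s (snd RA)).

Lemma der_shift : forall X : seqt, der X -> forall k, der (map (shk k) X).
Proof.
  induction 1; intros k; unfold shk in *; rewrite ?map_app in *; simpl in *.
  - eapply d_perm; [apply Permutation_map; eassumption | auto].
  - rewrite map_map; simpl. apply d_id; auto.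
  - apply d_weaken. specialize (IHderivable k). rewrite map_app in IHderivable; auto.
  - apply d_neg. specialize (IHderivable k). rewrite map_app in IHderivable; auto.
  - apply d_and_neg_l; auto. specialize (IHderivable k). rewrite map_app in IHderivable; auto.
  - apply d_and_neg_r; auto. specialize (IHderivable k). rewrite map_app in IHderivable; auto.
  - apply d_and_pos; auto.
    + specialize (IHderivable1 k). rewrite map_app in IHderivable1; auto.
    + specialize (IHderivable2 k). rewrite map_app in IHderivable2; auto.
  - apply d_imp_neg; auto. specialize (IHderivable k). rewrite map_app in IHderivable; auto.
  - apply d_imp_pos; auto.
    + specialize (IHderivable1 k). rewrite map_app in IHderivable1; auto.
    + specialize (IHderivable2 k). rewrite map_app in IHderivable2; auto.
  - apply d_all_neg with (t := tshift k t); auto. specialize (IHderivable k).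
    rewrite map_app in IHderivable; simpl in IHderivable.
    unfold inst in *. rewrite F2 in IHderivable by lia. auto.
  - apply d_all_pos; auto. specialize (IHderivable (S k)).
    rewrite map_app in IHderivable; simpl in IHderivable.
    match goal with |- derivable (?X ++ _) => match type of IHderivable with derivable (?Y ++ _) =>
      replace X with Y; auto end end.
    unfold Defs.seq_shift. rewrite !map_map. apply map_ext. intros [R' B]; simpl.
    rewrite F1 by lia. auto.
Qed.

Lemma der_subst : forall X : seqt, der X -> forall k s, der (map (sbk k s) X).
Proof.
  induction 1; intros k s; unfold sbk in *; rewrite ?map_app in *; simpl in *.
  - eapply d_perm; [apply Permutation_map; eassumption | auto].
  - rewrite map_map; simpl. apply d_id; auto.
  - apply d_weaken. specialize (IHderivable k s). rewrite map_app in IHderivable; auto.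
  - apply d_neg. specialize (IHderivable k s). rewrite map_app in IHderivable; auto.
  - apply d_and_neg_l; auto. specialize (IHderivable k s). rewrite map_app in IHderivable; auto.
  - apply d_and_neg_r; auto. specialize (IHderivable k s). rewrite map_app in IHderivable; auto.
  - apply d_and_pos; auto.
    + specialize (IHderivable1 k s). rewrite map_app in IHderivable1; auto.
    + specialize (IHderivable2 k s). rewrite map_app in IHderivable2; auto.
  - apply d_imp_neg; auto. specialize (IHderivable k s). rewrite map_app in IHderivable; auto.
  - apply d_imp_pos; auto.
    + specialize (IHderivable1 k s). rewrite map_app in IHderivable1; auto.
    + specialize (IHderivable2 k s). rewrite map_app in IHderivable2; auto.
  - apply d_all_neg with (t := tsubst k s t); auto. specialize (IHderivable k s).
    rewrite map_app in IHderivable; simpl in IHderivable.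
    unfold inst in *. rewrite F3 in IHderivable by lia. auto.
  - apply d_all_pos; auto. specialize (IHderivable (S k) (tshift 0 s)).
    rewrite map_app in IHderivable; simpl in IHderivable.
    match goal with |- derivable (?X ++ _) => match type of IHderivable with derivable (?Y ++ _) =>
      replace X with Y; auto end end.
    unfold Defs.seq_shift. rewrite !map_map. apply map_ext. intros [R' B]; simpl.
    rewrite F5 by lia. auto.
Qed.

Lemma seq_shift_eq : forall G : seqt, Defs.seq_shift G = map (shk 0) G.
Proof. reflexivity. Qed.

Lemma sbk_shift : forall (G : seqt) s, map (sbk 0 s) (Defs.seq_shift G) = G.
Proof.
  intros. unfold Defs.seq_shift, sbk. rewrite map_map.
  transitivity (map (fun x => x) G); [|apply map_id].
  apply map_ext. intros [R B]; simpl. rewrite F4. auto.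
Qed.
End Maps.
Arguments shk {Role F P}. Arguments sbk {Role F P}.
From Stdlib Require Import Classical.

Ltac htac Hin := let z := fresh "z" in let Hz := fresh "Hz" in
  intros z Hz; specialize (Hin z); try rewrite !in_app_iff in Hz; try rewrite !in_app_iff in Hin;
  try rewrite !in_app_iff; simpl in Hz, Hin |- *;
  intuition.

Ltac inc := let z := fresh "z" in let Hz := fresh "Hz" in
  intros z Hz; try rewrite !in_app_iff in Hz; try rewrite !in_app_iff; simpl in Hz |- *; intuition (subst; auto).

Section Generic.
Variables Role F P : Type.
Notation form := (formula Role F P).
Notation seqt := (sequent Role F P).
Notation der := (@derivable Role F P).
Variable Rel : iformula Role F P -> seqt -> Prop.
Hypothesis Hsh : forall y Ws, Rel y Ws -> Rel (shk 0 y) (Defs.seq_shift Ws).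
Hypothesis Hid : forall y Ws (G : seqt) Rs a, Rel y Ws -> partition_of_roles Rs ->
  (forall z, In z (map (fun R => (R, Prim _ a)) Rs) -> z = y \/ In z G) -> der (G ++ Ws).
Hypothesis Hneg : forall y Ws (G : seqt) R f A, Rel y Ws -> y = (R, Neg f A) ->
  der (G ++ [(rpreim f R, A)] ++ Ws) -> der (G ++ Ws).
Hypothesis Handl : forall y Ws (G : seqt) R U A B, Rel y Ws -> y = (R, And U A B) -> ~ uin R U ->
  der (G ++ [(R, A)] ++ Ws) -> der (G ++ Ws).
Hypothesis Handr : forall y Ws (G : seqt) R U A B, Rel y Ws -> y = (R, And U A B) -> ~ uin R U ->
  der (G ++ [(R, B)] ++ Ws) -> der (G ++ Ws).
Hypothesis Handp : forall y Ws (G : seqt) R U A B, Rel y Ws -> y = (R, And U A B) -> uin R U ->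
  der (G ++ [(R, A)] ++ Ws) -> der (G ++ [(R, B)] ++ Ws) -> der (G ++ Ws).
Hypothesis Himpn : forall y Ws (G : seqt) R f U A B, Rel y Ws -> y = (R, Imp f U A B) -> ~ uin R U ->
  der (G ++ [(rpreim f R, A); (R, B)] ++ Ws) -> der (G ++ Ws).
Hypothesis Himpp : forall y Ws (G : seqt) R f U A B, Rel y Ws -> y = (R, Imp f U A B) -> uin R U ->
  der (G ++ [(rpreim f R, A)] ++ Ws) -> der (G ++ [(R, B)] ++ Ws) -> der (G ++ Ws).
Hypothesis Halln : forall y Ws (G : seqt) R U A t, Rel y Ws -> y = (R, All U A) -> ~ uin R U ->
  der (G ++ [(R, inst A t)] ++ Ws) -> der (G ++ Ws).
Hypothesis Hallp : forall y Ws (G : seqt) R U A, Rel y Ws -> y = (R, All U A) -> uin R U ->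
  der (Defs.seq_shift G ++ [(R, A)] ++ Defs.seq_shift Ws) -> der (G ++ Ws).

Lemma gen : forall D : seqt, der D -> forall y Ws (G : seqt), Rel y Ws ->
  (forall z, In z D -> z = y \/ In z G) -> der (G ++ Ws).
Proof.
  induction 1; intros y Ws Γ HR Hin.
  - apply IHderivable with y; auto. intros z Hz; apply Hin; eapply Permutation_in; eauto.
  - apply (Hid y Ws Γ Rs a HR H). intros z Hz; apply Hin; apply in_app_iff; right; auto.
  - apply IHderivable with y; auto. htac Hin.
  - destruct (classic ((R, Neg f A) = y)) as [E|E].
    + eapply Hneg; eauto. rewrite app_assoc. apply IHderivable with y; auto. htac Hin.
    + assert (Hx : In (R, Neg f A) Γ) by (destruct (Hin (R, Neg f A)) as [E'|E']; [apply in_app_iff; right; left; auto | congruence | auto]).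
      apply der_incl with ((Γ ++ Ws) ++ [(R, Neg f A)]); [|inc].
      apply d_neg. apply der_incl with ((Γ ++ [(rpreim f R, A)]) ++ Ws); [|inc].
      apply IHderivable with y; auto. htac Hin.
  - destruct (classic ((R, And U A B) = y)) as [E|E].
    + eapply Handl; eauto. rewrite app_assoc. apply IHderivable with y; auto. htac Hin.
    + assert (Hx : In (R, And U A B) Γ) by (destruct (Hin (R, And U A B)) as [E'|E']; [apply in_app_iff; right; left; auto | congruence | auto]).
      apply der_incl with ((Γ ++ Ws) ++ [(R, And U A B)]); [|inc].
      apply d_and_neg_l; auto. apply der_incl with ((Γ ++ [(R, A)]) ++ Ws); [|inc].
      apply IHderivable with y; auto. htac Hin.
  - destruct (classic ((R, And U A B) = y)) as [E|E].
    + eapply Handr; eauto. rewrite app_assoc. apply IHderivable with y; auto. htac Hin.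
    + assert (Hx : In (R, And U A B) Γ) by (destruct (Hin (R, And U A B)) as [E'|E']; [apply in_app_iff; right; left; auto | congruence | auto]).
      apply der_incl with ((Γ ++ Ws) ++ [(R, And U A B)]); [|inc].
      apply d_and_neg_r; auto. apply der_incl with ((Γ ++ [(R, B)]) ++ Ws); [|inc].
      apply IHderivable with y; auto. htac Hin.
  - destruct (classic ((R, And U A B) = y)) as [E|E].
    + eapply Handp; eauto; rewrite app_assoc.
      * apply IHderivable1 with y; auto. htac Hin.
      * apply IHderivable2 with y; auto. htac Hin.
    + assert (Hx : In (R, And U A B) Γ) by (destruct (Hin (R, And U A B)) as [E'|E']; [apply in_app_iff; right; left; auto | congruence | auto]).
      apply der_incl with ((Γ ++ Ws) ++ [(R, And U A B)]); [|inc].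
      apply d_and_pos; auto.
      * apply der_incl with ((Γ ++ [(R, A)]) ++ Ws); [|inc].
        apply IHderivable1 with y; auto. htac Hin.
      * apply der_incl with ((Γ ++ [(R, B)]) ++ Ws); [|inc].
        apply IHderivable2 with y; auto. htac Hin.
  - destruct (classic ((R, Imp f U A B) = y)) as [E|E].
    + eapply Himpn; eauto. rewrite app_assoc. apply IHderivable with y; auto. htac Hin.
    + assert (Hx : In (R, Imp f U A B) Γ) by (destruct (Hin (R, Imp f U A B)) as [E'|E']; [apply in_app_iff; right; left; auto | congruence | auto]).
      apply der_incl with ((Γ ++ Ws) ++ [(R, Imp f U A B)]); [|inc].
      apply d_imp_neg; auto. apply der_incl with ((Γ ++ [(rpreim f R, A); (R, B)]) ++ Ws); [|inc].
      apply IHderivable with y; auto. htac Hin.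
  - destruct (classic ((R, Imp f U A B) = y)) as [E|E].
    + eapply Himpp; eauto; rewrite app_assoc.
      * apply IHderivable1 with y; auto. htac Hin.
      * apply IHderivable2 with y; auto. htac Hin.
    + assert (Hx : In (R, Imp f U A B) Γ) by (destruct (Hin (R, Imp f U A B)) as [E'|E']; [rewrite !in_app_iff; right; right; left; auto | congruence | auto]).
      apply der_incl with ((Γ ++ Ws) ++ (Γ ++ Ws) ++ [(R, Imp f U A B)]); [|inc].
      apply d_imp_pos; auto.
      * apply der_incl with ((Γ ++ [(rpreim f R, A)]) ++ Ws); [|inc].
        apply IHderivable1 with y; auto. htac Hin.
      * apply der_incl with ((Γ ++ [(R, B)]) ++ Ws); [|inc].
        apply IHderivable2 with y; auto. htac Hin.
  - destruct (classic ((R, All U A) = y)) as [E|E].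
    + apply (Halln y Ws Γ R U A t HR (eq_sym E) H). rewrite app_assoc. apply IHderivable with y; auto. htac Hin.
    + assert (Hx : In (R, All U A) Γ) by (destruct (Hin (R, All U A)) as [E'|E']; [apply in_app_iff; right; left; auto | congruence | auto]).
      apply der_incl with ((Γ ++ Ws) ++ [(R, All U A)]); [|inc].
      eapply d_all_neg; eauto. apply der_incl with ((Γ ++ [(R, inst A t)]) ++ Ws); [|inc].
      apply IHderivable with y; auto. htac Hin.
  - assert (HI : der ((Defs.seq_shift Γ ++ [(R, A)]) ++ Defs.seq_shift Ws)).
    { apply IHderivable with (shk 0 y); auto.
      intros z Hz. rewrite !in_app_iff in Hz |- *. destruct Hz as [Hz|Hz].
      - unfold Defs.seq_shift in Hz. apply in_map_iff in Hz. destruct Hz as (z0 & <- & Hz0).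
        destruct (Hin z0) as [E|E]; [apply in_app_iff; left; auto| left; subst; reflexivity|].
        right; left. unfold Defs.seq_shift. apply in_map_iff. exists z0; auto.
      - right; right; auto. }
    destruct (classic ((R, All U A) = y)) as [E|E].
    + eapply Hallp; eauto. rewrite app_assoc. auto.
    + assert (Hx : In (R, All U A) Γ) by (destruct (Hin (R, All U A)) as [E'|E']; [apply in_app_iff; right; left; auto | congruence | auto]).
      apply der_incl with ((Γ ++ Ws) ++ [(R, All U A)]); [|inc].
      apply d_all_pos; auto. apply der_incl with (1 := HI).
      unfold Defs.seq_shift; rewrite map_app. inc.
Qed.
End Generic.
Arguments gen {Role F P}.
Section Part.
Context {Role : Type}.
Definition disj (S T : rset Role) := forall r, ~ (S r /\ T r).
Fixpoint pdisj (l : list (rset Role)) : Prop :=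
  match l with [] => True | X :: l' => (forall T, In T l' -> disj X T) /\ pdisj l' end.
Definition cover (l : list (rset Role)) := forall r, exists R, In R l /\ R r.

Lemma pdisj_nth : forall l, pdisj l <-> (forall i j, i < length l -> j < length l -> i <> j ->
   forall r, ~ (nth i l rempty r /\ nth j l rempty r)).
Proof.
  induction l as [|X l IH]; simpl.
  - split; auto. intros; lia.
  - split.
    + intros [H1 H2] i j Hi Hj Hij r. destruct i as [|i]; destruct j as [|j].
      * lia.
      * apply H1. apply nth_In. lia.
      * intros [Ha Hb]. assert (Hl : i < length l) by lia.
        apply (H1 (nth i l rempty) (nth_In _ _ Hl) r). tauto.
      * apply (proj1 IH H2 i j); lia.
    + intros H. split.
      * intros T HT r. destruct (In_nth _ _ rempty HT) as (j & Hj & <-).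
        apply (H 0 (S j)); simpl; lia.
      * apply IH. intros i j Hi Hj Hij. apply (H (S i) (S j)); lia.
Qed.

Lemma part_to : forall Rs, partition_of_roles Rs -> Rs <> [] /\ pdisj Rs /\ cover Rs.
Proof.
  intros Rs (H1 & H2 & H3). repeat split; auto. apply pdisj_nth; auto.
Qed.

Lemma part_of : forall Rs, Rs <> [] -> pdisj Rs -> cover Rs -> partition_of_roles Rs.
Proof.
  intros Rs H1 H2 H3. repeat split; auto. apply pdisj_nth; auto.
Qed.

Definition rmv (R : rset Role) (l : list (rset Role)) :=
  filter (fun X => if cdec X R then false else true) l.

Lemma in_rmv : forall R l X, In X (rmv R l) <-> In X l /\ X <> R.
Proof.
  intros. unfold rmv. rewrite filter_In. destruct (cdec X R); intuition congruence.
Qed.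

Lemma pdisj_rmv : forall R l, pdisj l -> pdisj (rmv R l).
Proof.
  intros R; induction l as [|X l IH]; simpl; auto. intros [H1 H2].
  destruct (cdec X R); simpl; auto. split; auto.
  intros T HT. apply H1. apply in_rmv in HT. tauto.
Qed.

Lemma disj_sym : forall X T, disj X T -> disj T X.
Proof. unfold disj. intros X T H r Hr. apply (H r). tauto. Qed.

Lemma pdisj_neq : forall l A B, pdisj l -> In A l -> In B l -> A <> B -> disj A B.
Proof.
  induction l as [|X l IH]; simpl; [tauto|]. intros A B [H1 H2] HA HB HAB.
  destruct HA as [<-|HA]; destruct HB as [<-|HB].
  - congruence.
  - auto.
  - apply disj_sym; auto.
  - auto.
Qed.

Lemma pdisj_app : forall l1 l2, pdisj l1 -> pdisj l2 ->
  (forall A B, In A l1 -> In B l2 -> disj A B) -> pdisj (l1 ++ l2).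
Proof.
  induction l1 as [|X l IH]; simpl; auto. intros l2 [H1 H2] H3 H4. split.
  - intros T HT. apply in_app_iff in HT. destruct HT; auto.
  - apply IH; auto.
Qed.
End Part.
Section Inv.
Variables Role F P : Type.
Notation form := (formula Role F P).
Notation seqt := (sequent Role F P).
Notation der := (@derivable Role F P).
Definition RNeg (y : iformula Role F P) (Ws : seqt) :=
  exists R f A, y = (R, Neg f A) /\ Ws = [(rpreim f R, A)].
Definition RAnd (y : iformula Role F P) (Ws : seqt) :=
  exists R U A B, uin R U /\ y = (R, And U A B) /\ (Ws = [(R, A)] \/ Ws = [(R, B)]).
Definition RImp (y : iformula Role F P) (Ws : seqt) :=
  exists R f U A B, uin R U /\ y = (R, Imp f U A B) /\ (Ws = [(rpreim f R, A)] \/ Ws = [(R, B)]).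
Definition RAll (y : iformula Role F P) (Ws : seqt) :=
  exists R U A t, uin R U /\ y = (R, All U A) /\ Ws = [(R, inst A t)].
Definition RSplit (y : iformula Role F P) (Ws : seqt) :=
  exists R a Ts, y = (R, Prim _ a) /\ Ws = map (fun T => (T, Prim _ a)) Ts /\ Ts <> [] /\
    pdisj Ts /\ (forall r, R r <-> exists T, In T Ts /\ T r).
Ltac crack := unfold RNeg, RAnd, RImp, RAll, RSplit in *; repeat match goal with
  | H : exists _, _ |- _ => destruct H
  | H : _ /\ _ |- _ => destruct H
  | H : ?a = ?b |- _ => is_var a; subst a
  | H : ?a = ?b |- _ => is_var b; subst b
  | H : _ = _ |- _ => injection H; clear H; intros
  end; try discriminate; try congruence.

Ltac hid_nonatom := intros yy WWs GG RRs bb HHR HHp Hin;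
  apply der_incl with ((GG ++ WWs) ++ map (fun R => (R, Prim _ bb)) RRs); [apply d_id; auto|];
  let z := fresh "z" in let Hz := fresh "Hz" in
  intros z Hz; apply in_app_iff in Hz; destruct Hz as [Hz|Hz]; [exact Hz|];
  destruct (Hin z Hz) as [E|E]; [|apply in_app_iff; left; exact E]; apply in_map_iff in Hz; destruct Hz as (? & <- & ?);
  crack.


Lemma inv_neg : forall (G : seqt) R f A, der (G ++ [(R, Neg f A)]) -> der (G ++ [(rpreim f R, A)]).
Proof.
  intros G R f A HD. apply (gen RNeg) with (D := G ++ [(R, Neg f A)]) (y := (R, Neg f A)); auto.
  - intros y Ws (R0 & f0 & A0 & -> & ->). exists R0, f0, (fshift 0 A0). split; reflexivity.
  - hid_nonatom.
  - intros; crack. apply der_incl with (1 := H1). inc.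
  - intros; crack.
  - intros; crack.
  - intros; crack.
  - intros; crack.
  - intros; crack.
  - intros; crack.
  - intros; crack.
  - exists R, f, A; auto.
  - intros z Hz; rewrite in_app_iff in Hz; simpl in Hz; intuition.
Qed.


Lemma inv_and : forall (G : seqt) R U A B, uin R U -> der (G ++ [(R, And U A B)]) ->
  der (G ++ [(R, A)]) /\ der (G ++ [(R, B)]).
Proof.
  intros G R U A B HU HD. split;
  apply (gen RAnd) with (D := G ++ [(R, And U A B)]) (y := (R, And U A B)); auto;
  try (intros z Hz; rewrite in_app_iff in Hz; simpl in Hz; intuition; fail);
  try (exists R, U, A, B; auto; fail).
  all: try (intros y Ws (R0 & U0 & A0 & B0 & HU0 & -> & HW); exists R0, U0, (fshift 0 A0), (fshift 0 B0); intuition (subst; auto); fail).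
  all: try (hid_nonatom; fail).
  all: try (intros; crack; fail).
  all: intros; crack; match goal with H : _ \/ _ |- _ => destruct H as [E|E]; subst end;
    match goal with Hd : der (?G0 ++ [?q] ++ [?q]) |- der (?G0 ++ [?q]) => apply der_incl with (1 := Hd); inc end.
Qed.


Lemma inv_imp : forall (G : seqt) R f U A B, uin R U -> der (G ++ [(R, Imp f U A B)]) ->
  der (G ++ [(rpreim f R, A)]) /\ der (G ++ [(R, B)]).
Proof.
  intros G R f U A B HU HD. split;
  apply (gen RImp) with (D := G ++ [(R, Imp f U A B)]) (y := (R, Imp f U A B)); auto;
  try (intros z Hz; rewrite in_app_iff in Hz; simpl in Hz; intuition; fail);
  try (exists R, f, U, A, B; auto; fail).
  all: try (intros y Ws (R0 & f0 & U0 & A0 & B0 & HU0 & -> & HW); exists R0, f0, U0, (fshift 0 A0), (fshift 0 B0); intuition (subst; auto); fail).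
  all: try (hid_nonatom; fail).
  all: try (intros; crack; fail).
  all: intros; crack; match goal with H : _ \/ _ |- _ => destruct H as [E|E]; subst end;
    match goal with Hd : der (?G0 ++ [?q] ++ [?q]) |- der (?G0 ++ [?q]) => apply der_incl with (1 := Hd); inc end.
Qed.


Lemma inv_all : forall (G : seqt) R U A t, uin R U -> der (G ++ [(R, All U A)]) ->
  der (G ++ [(R, inst A t)]).
Proof.
  intros G R U A t HU HD.
  apply (gen RAll) with (D := G ++ [(R, All U A)]) (y := (R, All U A)); auto.
  - intros y Ws (R0 & U0 & A0 & t0 & HU0 & -> & ->). exists R0, U0, (fshift 1 A0), (tshift 0 t0). repeat split; auto.
    unfold Defs.seq_shift, inst; simpl. rewrite F2 by lia. reflexivity.
  - hid_nonatom.
  - intros; crack.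
  - intros; crack.
  - intros; crack.
  - intros; crack.
  - intros; crack.
  - intros; crack.
  - intros; crack.
  - intros y Ws G' R' U' A' (R0 & U0 & A0 & t0 & HU0 & -> & ->) E HU' HD'. crack.
    apply der_subst with (k := 0) (s := t0) in HD'.
    rewrite !map_app, !sbk_shift in HD'. unfold Defs.seq_shift, sbk in HD'. simpl in HD'.
    rewrite F4 in HD'. apply der_incl with (1 := HD'). unfold inst. inc.
  - exists R, U, A, t; auto.
  - intros z Hz; rewrite in_app_iff in Hz; simpl in Hz; intuition.
Qed.

Lemma inv_all_gen : forall (G : seqt) R U A, uin R U -> der (G ++ [(R, All U A)]) ->
  der (Defs.seq_shift G ++ [(R, A)]).
Proof.
  intros G R U A HU HD. apply der_shift with (k := 0) in HD. rewrite map_app in HD. simpl in HD.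
  apply inv_all with (t := Var 0) in HD; auto. unfold inst in HD. rewrite F6 in HD. exact HD.
Qed.


Lemma split_atom : forall (G : seqt) R a Ts, der (G ++ [(R, Prim _ a)]) -> Ts <> [] -> pdisj Ts ->
  (forall r, R r <-> exists T, In T Ts /\ T r) -> der (G ++ map (fun T => (T, Prim _ a)) Ts).
Proof.
  intros G R a Ts HD HT Hp Hc.
  apply (gen RSplit) with (D := G ++ [(R, Prim _ a)]) (y := (R, Prim _ a)); auto.
  - intros y Ws (R0 & a0 & Ts0 & -> & -> & H1 & H2 & H3). exists R0, (ashift 0 a0), Ts0.
    repeat split; auto.
    unfold Defs.seq_shift; rewrite map_map; reflexivity.
    apply H3. apply H3.
  - intros y Ws G' Rs b (R' & a' & Ts' & -> & -> & H1 & H2 & H3) HP Hin.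
    destruct (part_to _ HP) as (Hne & Hpd & Hcv).
    destruct (classic (In R' Rs /\ b = a')) as [[HR' <-]|Hn].
    + apply der_incl with (G' ++ map (fun T => (T, Prim _ b)) (Ts' ++ rmv R' Rs)).
      * apply d_id. apply part_of.
        -- destruct Ts'; simpl; congruence.
        -- apply pdisj_app; auto. apply pdisj_rmv; auto.
           intros X Y HX HY r [HXr HYr]. apply in_rmv in HY. destruct HY as [HY HYR].
           assert (HR'r : R' r) by (apply H3; eauto).
           apply (pdisj_neq _ _ _ Hpd HR' HY (not_eq_sym HYR) r); auto.
        -- intros r. destruct (Hcv r) as (X & HX & HXr).
           destruct (classic (X = R')) as [->|HXR].
           ++ destruct (proj1 (H3 r) HXr) as (T & HT' & HTr). exists T; rewrite in_app_iff; auto.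
           ++ exists X. rewrite in_app_iff, in_rmv. auto.
      * rewrite map_app. intros z Hz. apply in_app_iff in Hz. apply in_app_iff.
        destruct Hz as [Hz|Hz]; auto. apply in_app_iff in Hz. destruct Hz as [Hz|Hz]; auto.
        apply in_map_iff in Hz. destruct Hz as (X & <- & HX). apply in_rmv in HX.
        destruct HX as [HX HXR].
        destruct (Hin (X, Prim _ b)) as [E|E]; [apply in_map_iff; eauto | crack | auto].
    + apply der_incl with ((G' ++ map (fun T => (T, Prim _ a')) Ts') ++ map (fun R => (R, Prim _ b)) Rs);
        [apply d_id; auto|].
      intros z Hz. apply in_app_iff in Hz. destruct Hz as [Hz|Hz]; [auto|].
      destruct (Hin z Hz) as [E|E]; [|apply in_app_iff; auto]. apply in_map_iff in Hz. destruct Hz as (X & <- & HX).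
      crack. exfalso; apply Hn; auto.
  - intros; crack.
  - intros; crack.
  - intros; crack.
  - intros; crack.
  - intros; crack.
  - intros; crack.
  - intros; crack.
  - intros; crack.
  - exists R, a, Ts; auto.
  - intros z Hz; rewrite in_app_iff in Hz; simpl in Hz; intuition.
Qed.
End Inv.
From Stdlib Require Import FunctionalExtensionality PropExtensionality.

Ltac crack := repeat match goal with
  | H : exists _, _ |- _ => destruct H
  | H : _ /\ _ |- _ => destruct H
  | H : ?a = ?b |- _ => is_var a; subst a
  | H : ?a = ?b |- _ => is_var b; subst b
  | H : _ = _ |- _ => injection H; clear H; intros
  end; try discriminate; try congruence.

Section Ultra.
Context {Role : Type}.
Lemma u_up : forall (U : ultrafilter Role) R S, uin R U -> (forall r, R r -> S r) -> uin S U.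
Proof. intros [U (H1 & H2 & H3 & H4)] R S; unfold uin; simpl; eauto. Qed.
Lemma u_int : forall (U : ultrafilter Role) R S, uin R U -> uin S U -> uin (rinter R S) U.
Proof. intros [U (H1 & H2 & H3 & H4)] R S; unfold uin; simpl; eauto. Qed.
Lemma u_cover : forall (U : ultrafilter Role) R1 R2, (forall r, R1 r \/ R2 r) -> ~ uin R1 U -> uin R2 U.
Proof.
  intros U R1 R2 Hc Hn. destruct U as [U (H1 & H2 & H3 & H4)]; unfold uin in *; simpl in *.
  destruct (H4 R1) as [H|H]; [tauto|]. apply (H2 _ _ H). intros r Hr. unfold rcompl in Hr.
  destruct (Hc r); tauto.
Qed.
Lemma u_inter_not : forall (U : ultrafilter Role) R1 R2, ~ uin R2 U -> ~ uin (rinter R1 R2) U.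
Proof. intros U R1 R2 Hn Hi. apply Hn. apply (u_up U _ _ Hi). intros r [_ H]; auto. Qed.
End Ultra.

Section Main.
Variables Role F P : Type.
Notation form := (formula Role F P).
Notation seqt := (sequent Role F P).
Notation der := (@derivable Role F P).

Definition posc (A : form) (R : rset Role) : Prop :=
  match A with
  | And U _ _ => uin R U
  | Imp _ U _ _ => uin R U
  | All U _ => uin R U
  | _ => True
  end.

Definition CUT (B : form) := forall R1 R2 (G1 G2 : seqt), (forall r, R1 r \/ R2 r) ->
  der (G1 ++ [(R1, B)]) -> der (G2 ++ [(R2, B)]) -> der (G1 ++ G2 ++ [(rinter R1 R2, B)]).

Definition RCut (n : nat) (y : iformula Role F P) (Ws : seqt) :=
  exists R1 R2 A G1, y = (R2, A) /\ Ws = G1 ++ [(rinter R1 R2, A)] /\ fsize A = n /\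
    der (G1 ++ [(R1, A)]) /\ (forall r, R1 r \/ R2 r) /\ posc A R1.

Lemma cover_pre : forall (R1 R2 : rset Role) f, (forall r, R1 r \/ R2 r) ->
  forall r, rpreim f R1 r \/ rpreim f R2 r.
Proof. intros; unfold rpreim; auto. Qed.

Lemma cut_pos : forall n, (forall B : form, fsize B < n -> CUT B) ->
  forall (A : form) R1 R2 (G1 G2 : seqt), fsize A = n -> (forall r, R1 r \/ R2 r) -> posc A R1 ->
  der (G1 ++ [(R1, A)]) -> der (G2 ++ [(R2, A)]) -> der (G1 ++ G2 ++ [(rinter R1 R2, A)]).
Proof.
  intros n IH A R1 R2 G1 G2 Hn Hc Hp H1 H2.
  apply der_incl with (G2 ++ G1 ++ [(rinter R1 R2, A)]); [|inc].
  apply (gen (RCut n)) with (D := G2 ++ [(R2, A)]) (y := (R2, A)); auto.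
  -
    intros y Ws (R1' & R2' & A' & G1' & -> & -> & Hs & HD & Hc' & Hp').
    exists R1', R2', (fshift 0 A'), (Defs.seq_shift G1'). repeat split; auto.
    + unfold Defs.seq_shift; rewrite map_app; reflexivity.
    + rewrite fsize_shift; auto.
    + apply der_shift with (k := 0) in HD. rewrite map_app in HD. exact HD.
    + destruct A'; simpl in *; auto.
  -
    intros y Ws G Rs b (R1' & R2' & A' & G1' & -> & -> & Hs & HD & Hc' & Hp') HP Hin.
    destruct (part_to _ HP) as (Hne & Hpd & Hcv).
    destruct (classic (In R2' Rs /\ A' = Prim _ b)) as [[HR2 ->]|Hno].
    + apply der_incl with (G1' ++ map (fun T => (T, Prim _ b)) (rinter R1' R2' :: rmv R2' Rs)).
      * apply split_atom with R1'; auto.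
        -- discriminate.
        -- simpl. split; [|apply pdisj_rmv; auto].
           intros T HT r [[Ha Hb] HTr]. apply in_rmv in HT. destruct HT as [HT HTR].
           apply (pdisj_neq _ _ _ Hpd HR2 HT (not_eq_sym HTR) r); auto.
        -- intros r; split.
           ++ intros Hr. destruct (Hcv r) as (X & HX & HXr).
              destruct (classic (X = R2')) as [->|HXR].
              ** exists (rinter R1' R2'); simpl; split; auto. split; auto.
              ** exists X; simpl; rewrite in_rmv; auto.
           ++ intros (T & HT & HTr). simpl in HT. destruct HT as [<-|HT]; [destruct HTr; auto|].
              apply in_rmv in HT. destruct HT as [HT HTR].
              destruct (Hc' r) as [?|HR2r]; auto. exfalso.
              apply (pdisj_neq _ _ _ Hpd HR2 HT (not_eq_sym HTR) r); auto.
      * intros z Hz. simpl in Hz. apply in_app_iff in Hz. destruct Hz as [Hz|Hz];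
          [rewrite !in_app_iff; auto|].
        simpl in Hz. destruct Hz as [<-|Hz]; [rewrite !in_app_iff; simpl; auto|].
        apply in_map_iff in Hz. destruct Hz as (X & <- & HX). apply in_rmv in HX.
        destruct HX as [HX HXR].
        destruct (Hin (X, Prim _ b)) as [E|E]; [apply in_map_iff; eauto | crack | ].
        apply in_app_iff; auto.
    + apply der_incl with ((G ++ G1' ++ [(rinter R1' R2', A')]) ++ map (fun R => (R, Prim _ b)) Rs);
        [apply d_id; auto|].
      intros z Hz. apply in_app_iff in Hz. destruct Hz as [Hz|Hz]; [auto|].
      destruct (Hin z Hz) as [E|E]; [|apply in_app_iff; auto]. apply in_map_iff in Hz.
      destruct Hz as (X & <- & HX). crack. exfalso; apply Hno; auto.
  -
    intros y Ws G R f B (R1' & R2' & A' & G1' & -> & -> & Hs & HD & Hc' & Hp') E HD2. crack.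
    apply inv_neg in HD.
    assert (HC := IH B ltac:(simpl in Hs |- *; lia) (rpreim f R1') (rpreim f R) G1'
       (G ++ G1' ++ [(rinter R1' R, Neg f B)]) (cover_pre _ _ f Hc') HD).
    match type of HC with ?X -> _ => assert (HX : X) by (apply der_incl with (1 := HD2); inc) end.
    specialize (HC HX).
    apply der_incl with ((G1' ++ G ++ G1' ++ [(rinter R1' R, Neg f B)]) ++ [(rinter R1' R, Neg f B)]);
      [|inc].
    apply d_neg. apply der_incl with (1 := HC). inc.
  -
    intros y Ws G R U B C (R1' & R2' & A' & G1' & -> & -> & Hs & HD & Hc' & Hp') E HU HD2. crack.
    simpl in Hp'. apply inv_and in HD; auto. destruct HD as [HD _].
    assert (HC := IH B ltac:(simpl in Hs |- *; lia) R1' R G1' (G ++ G1' ++ [(rinter R1' R, And U B C)]) Hc' HD).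
    match type of HC with ?X -> _ => assert (HX : X) by (apply der_incl with (1 := HD2); inc) end.
    specialize (HC HX).
    apply der_incl with ((G1' ++ G ++ G1' ++ [(rinter R1' R, And U B C)]) ++ [(rinter R1' R, And U B C)]);
      [|inc].
    apply d_and_neg_l; [apply u_inter_not; auto|]. apply der_incl with (1 := HC). inc.
  -
    intros y Ws G R U B C (R1' & R2' & A' & G1' & -> & -> & Hs & HD & Hc' & Hp') E HU HD2. crack.
    simpl in Hp'. apply inv_and in HD; auto. destruct HD as [_ HD].
    assert (HC := IH C ltac:(simpl in Hs |- *; lia) R1' R G1' (G ++ G1' ++ [(rinter R1' R, And U B C)]) Hc' HD).
    match type of HC with ?X -> _ => assert (HX : X) by (apply der_incl with (1 := HD2); inc) end.
    specialize (HC HX).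
    apply der_incl with ((G1' ++ G ++ G1' ++ [(rinter R1' R, And U B C)]) ++ [(rinter R1' R, And U B C)]);
      [|inc].
    apply d_and_neg_r; [apply u_inter_not; auto|]. apply der_incl with (1 := HC). inc.
  -
    intros y Ws G R U B C (R1' & R2' & A' & G1' & -> & -> & Hs & HD & Hc' & Hp') E HU HD2 HD3. crack.
    simpl in Hp'. apply inv_and in HD; auto. destruct HD as [HDB HDC].
    assert (HC1 := IH B ltac:(simpl in Hs |- *; lia) R1' R G1' (G ++ G1' ++ [(rinter R1' R, And U B C)]) Hc' HDB).
    match type of HC1 with ?X -> _ => assert (HX : X) by (apply der_incl with (1 := HD2); inc) end.
    specialize (HC1 HX).
    assert (HC2 := IH C ltac:(simpl in Hs |- *; lia) R1' R G1' (G ++ G1' ++ [(rinter R1' R, And U B C)]) Hc' HDC).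
    match type of HC2 with ?X -> _ => assert (HX2 : X) by (apply der_incl with (1 := HD3); inc) end.
    specialize (HC2 HX2).
    apply der_incl with ((G1' ++ G ++ G1' ++ [(rinter R1' R, And U B C)]) ++ [(rinter R1' R, And U B C)]);
      [|inc].
    apply d_and_pos; [apply u_int; auto| |]; [apply der_incl with (1 := HC1) | apply der_incl with (1 := HC2)]; inc.
  -
    intros y Ws G R f U B C (R1' & R2' & A' & G1' & -> & -> & Hs & HD & Hc' & Hp') E HU HD2. crack.
    simpl in Hp'. apply inv_imp in HD; auto. destruct HD as [HDB HDC].
    set (Wc := [(rinter R1' R, Imp f U B C)]).
    assert (HC1 := IH C ltac:(simpl in Hs |- *; lia) R1' R G1' (G ++ [(rpreim f R, B)] ++ G1' ++ Wc) Hc' HDC).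
    match type of HC1 with ?X -> _ => assert (HX : X) by (apply der_incl with (1 := HD2); unfold Wc; inc) end.
    specialize (HC1 HX).
    assert (HC2 := IH B ltac:(simpl in Hs |- *; lia) (rpreim f R1') (rpreim f R) G1'
       (G1' ++ G ++ G1' ++ Wc ++ [(rinter R1' R, C)]) (cover_pre _ _ f Hc') HDB).
    match type of HC2 with ?X -> _ => assert (HX2 : X) by (apply der_incl with (1 := HC1); unfold Wc; inc) end.
    specialize (HC2 HX2).
    apply der_incl with ((G1' ++ G ++ G1' ++ Wc) ++ Wc); [|unfold Wc; inc].
    unfold Wc at 2. apply d_imp_neg; [apply u_inter_not; auto|].
    apply der_incl with (1 := HC2). unfold Wc. inc.
  -
    intros y Ws G R f U B C (R1' & R2' & A' & G1' & -> & -> & Hs & HD & Hc' & Hp') E HU HD2 HD3. crack.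
    simpl in Hp'. apply inv_imp in HD; auto. destruct HD as [HDB HDC].
    set (Wc := [(rinter R1' R, Imp f U B C)]).
    assert (HC1 := IH B ltac:(simpl in Hs |- *; lia) (rpreim f R1') (rpreim f R) G1' (G ++ G1' ++ Wc)
       (cover_pre _ _ f Hc') HDB).
    match type of HC1 with ?X -> _ => assert (HX : X) by (apply der_incl with (1 := HD2); unfold Wc; inc) end.
    specialize (HC1 HX).
    assert (HC2 := IH C ltac:(simpl in Hs |- *; lia) R1' R G1' (G ++ G1' ++ Wc) Hc' HDC).
    match type of HC2 with ?X -> _ => assert (HX2 : X) by (apply der_incl with (1 := HD3); unfold Wc; inc) end.
    specialize (HC2 HX2).
    apply der_incl with ((G1' ++ G ++ G1' ++ Wc) ++ (G1' ++ G ++ G1' ++ Wc) ++ Wc); [|unfold Wc; inc].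
    unfold Wc at 3. apply d_imp_pos; [apply u_int; auto| |].
    + apply der_incl with (1 := HC1). inc.
    + apply der_incl with (1 := HC2). inc.
  -
    intros y Ws G R U B t (R1' & R2' & A' & G1' & -> & -> & Hs & HD & Hc' & Hp') E HU HD2. crack.
    simpl in Hp'. apply inv_all with (t := t) in HD; auto.
    assert (HC := IH (inst B t) ltac:(unfold inst; rewrite fsize_subst; simpl in Hs |- *; lia) R1' R G1'
       (G ++ G1' ++ [(rinter R1' R, All U B)]) Hc' HD).
    match type of HC with ?X -> _ => assert (HX : X) by (apply der_incl with (1 := HD2); inc) end.
    specialize (HC HX).
    apply der_incl with ((G1' ++ G ++ G1' ++ [(rinter R1' R, All U B)]) ++ [(rinter R1' R, All U B)]);
      [|inc].
    apply d_all_neg with t; [apply u_inter_not; auto|]. apply der_incl with (1 := HC). inc.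
  -
    intros y Ws G R U B (R1' & R2' & A' & G1' & -> & -> & Hs & HD & Hc' & Hp') E HU HD2. crack.
    simpl in Hp'. apply inv_all_gen in HD; auto.
    assert (HC := IH B ltac:(simpl in Hs |- *; lia) R1' R (Defs.seq_shift G1')
       (Defs.seq_shift (G ++ G1' ++ [(rinter R1' R, All U B)])) Hc' HD).
    match type of HC with ?X -> _ => assert (HX : X) by (apply der_incl with (1 := HD2);
      unfold Defs.seq_shift; rewrite !map_app; inc) end.
    specialize (HC HX).
    apply der_incl with ((G1' ++ G ++ G1' ++ [(rinter R1' R, All U B)]) ++ [(rinter R1' R, All U B)]);
      [|inc].
    apply d_all_pos; [apply u_int; auto|]. apply der_incl with (1 := HC).
    unfold Defs.seq_shift; rewrite !map_app; inc.
  - exists R1, R2, A, G1; repeat split; auto.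
  - intros z Hz; rewrite in_app_iff in Hz; simpl in Hz; intuition.
Qed.
End Main.
Arguments posc {Role F P}. Arguments CUT {Role F P}.
Lemma posc_swap : forall {Role F P} (A : formula Role F P) R1 R2, (forall r, R1 r \/ R2 r) ->
  ~ posc A R1 -> posc A R2.
Proof.
  intros Role F P A R1 R2 Hc Hn; destruct A; simpl in *; try tauto; eapply u_cover; eauto.
Qed.

Lemma cut_all : forall {Role F P} n (A : formula Role F P), fsize A = n -> CUT A.
Proof.
  intros Role F P n. induction n as [n IHn] using lt_wf_ind.
  intros A Hn R1 R2 G1 G2 Hc H1 H2.
  assert (IH : forall B : formula Role F P, fsize B < n -> CUT B) by (intros B HB; eapply IHn; eauto).
  destruct (classic (posc A R1)) as [Hp|Hp].
  - exact (cut_pos _ _ _ n IH A R1 R2 G1 G2 Hn Hc Hp H1 H2).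
  - apply (posc_swap A R1 R2 Hc) in Hp.
    assert (HD := cut_pos _ _ _ n IH A R2 R1 G2 G1 Hn ltac:(intros r; destruct (Hc r); auto) Hp H2 H1).
    replace (rinter R1 R2) with (rinter R2 R1).
    + apply der_incl with (1 := HD). inc.
    + apply functional_extensionality; intros r. apply propositional_extensionality.
      unfold rinter; tauto.
Qed.

Theorem mainTheorem5 (Role F P : Type) (r0 : Role)
  (R1 R2 : rset Role)
  (Hdisj : forall r, ~ (rcompl R1 r /\ rcompl R2 r))
  (G1 G2 : sequent Role F P) (A : formula Role F P) :
  derivable (G1 ++ [(R1, A)]) ->
  derivable (G2 ++ [(R2, A)]) ->
  derivable (G1 ++ G2 ++ [(rinter R1 R2, A)]).
Proof.
  intros H1 H2. apply (cut_all (fsize A) A eq_refl); auto.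
  intros r. destruct (classic (R1 r)); auto. right. apply NNPP. intro H'.
  apply (Hdisj r). unfold rcompl; auto.
Qed.
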